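(* Consider the linear MTE model ($M=1$, $h_1(u)=u-\frac12$) and fixed weights $(c_\mu,c_\rho)\ne(0,0)$, $c=(c_\mu,c_\rho,-c_\mu,-c_\rho)'$. For $(\theta,F)\in\mathcal P$ let $\lambda=c'\theta$ and $$S=[\partial_pg(\lambda)]\Sigma_p[\partial_pg(\lambda)]'+[\partial_{\beta_1}g(\lambda)]\Sigma_{\beta_1}[\partial_{\beta_1}g(\lambda)]'+[\partial_{\beta_0}g(\lambda)]\Sigma_{\beta_0}[\partial_{\beta_0}g(\lambda)]'.$$ Then $\inf_{(\theta,F)\in\mathcal P}\lambda_{\min}(S)>0$ and $\sup_{(\theta,F)\in\mathcal P}\lambda_{\max}(S)<\infty$, where $\lambda_{\min},\lambda_{\max}$ denote the smallest and largest eigenvalues.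
   Context: General MTE setup. Observables are $(Y,D,Z)$ with $Y\in\mathbb R$, $D\in\{0,1\}$, $Z$ discrete with support $\{z_0,\dots,z_K\}$. Fix an integer $M\ge1$ and known continuous functions $h_1,\dots,h_M$ on $(0,1)$; set $\lambda_{10}=\lambda_{00}\equiv1$ and for $m=1,\dots,M$, $p\in(0,1)$: $\lambda_{1m}(p)=\frac1p\int_0^p h_m(u)du$, $\lambda_{0m}(p)=\frac1{1-p}\int_p^1 h_m(u)du$. For $p=(p(z_0),\dots,p(z_K))'\in(0,1)^{K+1}$ let $A_d(p)$ be the $(K+1)\times(M+1)$ matrix with $(\ell,m)$ entry $\lambda_{dm}(p(z_\ell))$ ($\ell=0,\dots,K$; $m=0,\dots,M$), and $A(p)=\mathrm{diag}(A_1(p),A_0(p))\in\mathbb R^{2(K+1)\times 2(M+1)}$. Parameters: $\theta=(\theta_1',\theta_0')'$, $\theta_d=(\theta_{d0},\dots,\theta_{dM})'=(\mu_d,\rho_{d1},\dots,\rho_{dM})'$. For a distribution $F$ of $(Y,D,Z)$: $q_F(z_\ell)=P_F(Z=z_\ell)$, $p_F(z_\ell)=P_F(D=1\mid Z=z_\ell)$, $p_F=(p_F(z_0),\dots,p_F(z_K))'$, $q_F(1,z_\ell)=p_F(z_\ell)q_F(z_\ell)$, $q_F(0,z_\ell)=(1-p_F(z_\ell))q_F(z_\ell)$, $\beta_{F,d\ell}=E_F[Y\mid D=d,Z=z_\ell]$, $\beta_{F,d}=(\beta_{F,d0},\dots,\beta_{F,dK})'$, $\beta_F=(\beta_{F,1}',\beta_{F,0}')'$,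 $\sigma^2_{F,d\ell}=\mathrm{Var}_F(Y\mid D=d,Z=z_\ell)$, $A_F=A(p_F)$. Parameter space: fix $\delta,\zeta>0$, $\epsilon\in(0,1/2)$ and a compact $\Theta\subset\mathbb R^{2(M+1)}$ with nonempty interior. $\mathcal P$ is the set of pairs $(\theta,F)$ such that (i) $K\ge M$, $\theta\in\mathrm{int}(\Theta)$ and $A_F\theta=\beta_F$; (ii) $\sup_{d\in\{0,1\}}\sup_{\ell}E_F[|Y|^{2+\delta}\mid D=d,Z=z_\ell]\le\zeta$; (iii) $\epsilon\le p_F(z_\ell)\le 1-\epsilon$ for all $\ell$; (iv) $\epsilon\le q_F(z_\ell)\le1-\epsilon$ for all $\ell$; (v) $\sigma^2_{F,d\ell}\ge\epsilon$ for all $d,\ell$. Linear MTE moments. With $M=1$, $h_1(u)=u-\frac12$ and $c=(c_\mu,c_\rho,-c_\mu,-c_\rho)'$, for $k=1,\dots,K$ and given $(p,\beta)$ define $\Delta_\mu(z_0,z_k)=p(z_k)[\beta_{10}-\beta_{00}]-p(z_0)[\beta_{1k}-\beta_{0k}]+\beta_{1k}-\beta_{10}$, $\Delta_\rho(z_0,z_k)=2(\beta_{00}-\beta_{10}+\beta_{1k}-\beta_{0k})$ and $g_k(\lambda)=[p(z_k)-p(z_0)]\lambda-c_\mu\Delta_\mu(z_0,z_k)-c_\rho\Delta_\rho(z_0,z_k)$, viewed as a function of $(\lambda,p,\beta_1,\beta_0)$; $g(\lambda)=(g_1(\lambda),\dots,g_K(\lambda))'$. In this lemma, $\partial_xg(\lambda)$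 for $x\in\{p,\beta_1,\beta_0\}$ is the $K\times(K+1)$ Jacobian of $g(\lambda)$ with respect to $x$ evaluated at $(p_F,\beta_{F,1},\beta_{F,0})$; $\Sigma_p=\mathrm{diag}\{p_F(z_\ell)(1-p_F(z_\ell))/q_F(z_\ell)\}_\ell$ and $\Sigma_{\beta_d}=\mathrm{diag}\{\sigma^2_{F,d\ell}/q_F(d,z_\ell)\}_\ell$. *)

(* Defs.v *)
From HB Require Import structures.
From mathcomp Require Import all_boot all_order all_algebra.
From mathcomp Require Import all_classical all_reals all_analysis.
Set Implicit Arguments. Unset Strict Implicit. Unset Printing Implicit Defensive.
Import Order.TTheory GRing.Theory Num.Theory.
Import numFieldTopology.Exports numFieldNormedType.Exports.
Local Open Scope classical_set_scope.
Local Open Scope ring_scope.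

(* A distribution F of (Y,D,Z), Z with support {z_0,...,z_K} (indexed  *)
(* by 'I_K.+1), D in {0,1} (bool, true = 1), Y real, is described by   *)
(*   qZ l      = P_F(Z = z_l)                                            *)
(*   pZ l      = P_F(D = 1 | Z = z_l)                                    *)
(*   lawY d l  = law of Y given D = d, Z = z_l  (a probability on R).    *)
Record mte_dist (R : realType) (K : nat) := MteDist {
  qZ : 'I_K.+1 -> R ;
  pZ : 'I_K.+1 -> R ;
  lawY : bool -> 'I_K.+1 -> probability R R }.

Definition is_dist (R : realType) (K : nat) (F : mte_dist R K) : Prop :=
  (forall l, 0 <= qZ F l) /\ \sum_l qZ F l = 1 /\
  (forall l, 0 <= pZ F l <= 1).

Definition qDZ (R : realType) (K : nat) (F : mte_dist R K) (d : bool)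
    (l : 'I_K.+1) : R :=
  if d then pZ F l * qZ F l else (1 - pZ F l) * qZ F l.

Definition betaF (R : realType) (K : nat) (F : mte_dist R K) (d : bool)
    (l : 'I_K.+1) : R :=
  fine (\int[lawY F d l]_y (y%:E)).

Definition sigma2F (R : realType) (K : nat) (F : mte_dist R K) (d : bool)
    (l : 'I_K.+1) : R :=
  fine (\int[lawY F d l]_y (((y - betaF F d l) ^+ 2)%:E)).

Definition momentF (R : realType) (K : nat) (F : mte_dist R K) (delta : R)
    (d : bool) (l : 'I_K.+1) : \bar R :=
  \int[lawY F d l]_y ((`|y| `^ (2 + delta))%:E).

(* Linear MTE: M = 1, h_1(u) = u - 1/2.  lambda_{10} = lambda_{00} = 1,
   lambda_{11}(p) = (1/p) int_0^p (u - 1/2) du = (p - 1)/2,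
   lambda_{01}(p) = (1/(1-p)) int_p^1 (u - 1/2) du = p/2. *)
Definition lam11 (R : realType) (p : R) : R := (p - 1) / 2.
Definition lam01 (R : realType) (p : R) : R := p / 2.

Definition A1mx (R : realType) (K : nat) (p : 'I_K.+1 -> R) : 'M[R]_(K.+1, 2) :=
  \matrix_(l < K.+1, m < 2) (if m == ord0 then 1 else lam11 (p l)).
Definition A0mx (R : realType) (K : nat) (p : 'I_K.+1 -> R) : 'M[R]_(K.+1, 2) :=
  \matrix_(l < K.+1, m < 2) (if m == ord0 then 1 else lam01 (p l)).
Definition Amx (R : realType) (K : nat) (p : 'I_K.+1 -> R)
    : 'M[R]_(K.+1 + K.+1, 2 + 2) :=
  block_mx (A1mx p) 0 0 (A0mx p).

Definition betavec (R : realType) (K : nat) (F : mte_dist R K)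
    : 'cV[R]_(K.+1 + K.+1) :=
  col_mx (\col_l betaF F true l) (\col_l betaF F false l).

(* theta = (mu_1, rho_1, mu_0, rho_0)' ;  c = (c_mu, c_rho, -c_mu, -c_rho)' *)
Definition cvec (R : realType) (cmu crho : R) : 'cV[R]_(2 + 2) :=
  col_mx (\col_(m < 2) (if m == ord0 then cmu else crho))
         (\col_(m < 2) (if m == ord0 then - cmu else - crho)).

Definition lamc (R : realType) (cmu crho : R) (theta : 'cV[R]_(2 + 2)) : R :=
  ((cvec cmu crho)^T *m theta) ord0 ord0.

Definition inP (R : realType) (K : nat) (delta zeta eps : R)
    (Theta : set 'cV[R]_(2 + 2)) (theta : 'cV[R]_(2 + 2)) (F : mte_dist R K)
    : Prop :=
  is_dist F /\
  (1 <= K)%N /\ (Theta°) theta /\ Amx (pZ F) *m theta = betavec F /\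
  (forall d l, (momentF F delta d l <= zeta%:E)%E) /\
  (forall l, eps <= pZ F l <= 1 - eps) /\
  (forall l, eps <= qZ F l <= 1 - eps) /\
  (forall d l, (eps%:E <= \int[lawY F d l]_y (((y - betaF F d l) ^+ 2)%:E))%E).

(* The moment functions g_k, k = 1..K (k : 'I_K stands for index k+1). *)
Definition Delta_mu (R : realType) (K : nat) (p b1 b0 : 'I_K.+1 -> R)
    (k : 'I_K) : R :=
  let kk := lift ord0 k in
  p kk * (b1 ord0 - b0 ord0) - p ord0 * (b1 kk - b0 kk) + b1 kk - b1 ord0.

Definition Delta_rho (R : realType) (K : nat) (p b1 b0 : 'I_K.+1 -> R)
    (k : 'I_K) : R :=
  let kk := lift ord0 k in
  2 * (b0 ord0 - b1 ord0 + b1 kk - b0 kk).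

Definition gk (R : realType) (K : nat) (cmu crho : R) (k : 'I_K) (lam : R)
    (p b1 b0 : 'I_K.+1 -> R) : R :=
  (p (lift ord0 k) - p ord0) * lam - cmu * Delta_mu p b1 b0 k
    - crho * Delta_rho p b1 b0 k.

Definition upd (R : realType) (K : nat) (f : 'I_K.+1 -> R) (l : 'I_K.+1) (t : R)
    : 'I_K.+1 -> R :=
  fun j => if j == l then t else f j.

Definition Jp (R : realType) (K : nat) (cmu crho lam : R) (p b1 b0 : 'I_K.+1 -> R)
    : 'M[R]_(K, K.+1) :=
  \matrix_(k < K, l < K.+1)
    derive1 (fun t : R => gk cmu crho k lam (upd p l t) b1 b0) (p l).
Definition Jb1 (R : realType) (K : nat) (cmu crho lam : R) (p b1 b0 : 'I_K.+1 -> R)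
    : 'M[R]_(K, K.+1) :=
  \matrix_(k < K, l < K.+1)
    derive1 (fun t : R => gk cmu crho k lam p (upd b1 l t) b0) (b1 l).
Definition Jb0 (R : realType) (K : nat) (cmu crho lam : R) (p b1 b0 : 'I_K.+1 -> R)
    : 'M[R]_(K, K.+1) :=
  \matrix_(k < K, l < K.+1)
    derive1 (fun t : R => gk cmu crho k lam p b1 (upd b0 l t)) (b0 l).

Definition Sigma_p (R : realType) (K : nat) (F : mte_dist R K) : 'M[R]_K.+1 :=
  diag_mx (\row_l (pZ F l * (1 - pZ F l) / qZ F l)).
Definition Sigma_b (R : realType) (K : nat) (F : mte_dist R K) (d : bool)
    : 'M[R]_K.+1 :=
  diag_mx (\row_l (sigma2F F d l / qDZ F d l)).

Definition Smat (R : realType) (K : nat) (cmu crho : R) (theta : 'cV[R]_(2 + 2))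
    (F : mte_dist R K) : 'M[R]_K :=
  let lam := lamc cmu crho theta in
  let p := pZ F in
  let b1 := betaF F true in
  let b0 := betaF F false in
  let J1 := Jp cmu crho lam p b1 b0 in
  let J2 := Jb1 cmu crho lam p b1 b0 in
  let J3 := Jb0 cmu crho lam p b1 b0 in
  J1 *m Sigma_p F *m J1^T + J2 *m Sigma_b F true *m J2^T
    + J3 *m Sigma_b F false *m J3^T.

(* Main.v *)
Require Import Defs.
From HB Require Import structures.
From mathcomp Require Import all_boot all_order all_algebra.
From mathcomp Require Import all_classical all_reals all_analysis.
From mathcomp Require Import ring lra measurable_realfun.
Import Order.TTheory GRing.Theory Num.Theory.
Import numFieldTopology.Exports numFieldNormedType.Exports.
Set Implicit Arguments. Unset Strict Implicit.
Local Open Scope classical_set_scope.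
Local Open Scope ring_scope.

Lemma entry_le_norm (R : realType) m n (x : 'M[R]_(m, n)) i j :
  `|x i j| <= `|x|.
Proof.
have -> : `|x| = mx_norm x by []. rewrite mx_normrE.
have -> : `|x i j| = `|x (i, j).1 (i, j).2| by [].
exact: (le_bigmax _ (fun ij => `|x ij.1 ij.2|) (i, j)).
Qed.

Lemma bounded_entries (R : realType) m n (A : set 'M[R]_(m, n)) :
  compact A -> exists T : R, 0 <= T /\ forall x, A x -> forall i j, `|x i j| <= T.
Proof.
move=> /compact_bounded [M [_ HM]].
exists (Num.max 0 (M + 1)); split; first by rewrite le_max lexx.
move=> x Ax i j; apply: le_trans (entry_le_norm x i j) _.
apply: le_trans (HM (M+1) _ x Ax) _.
  by rewrite ltrDl.
by rewrite le_max lexx orbT.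
Qed.

Lemma derive1_affine (R : realType) (f : R -> R) (al be x : R) :
  (forall t, f t = al * t + be) -> derive1 f x = al.
Proof.
move=> Hf.
have -> : f = ((al \*: (@id R)) + cst be)%R.
  apply: funext. move=> t. rewrite Hf /=. rewrite !fctE /=. reflexivity.
rewrite derive1E.
have H : is_derive x (1:R) ((al \*: (@id R)) + cst be)%R (al *: 1 + 0).
  by apply: is_deriveD.
rewrite derive_val addr0. by rewrite /GRing.scale /= mulr1.
Qed.

Definition ind (R : realType) (b : bool) : R := if b then 1 else 0.

Lemma Jp_entry (R : realType) K (cmu crho lam : R) (p b1 b0 : 'I_K.+1 -> R) k l :
  Jp cmu crho lam p b1 b0 k l =
  ind R (lift ord0 k == l) * (lam - cmu * (b1 ord0 - b0 ord0))
  + ind R (ord0 == l) * (- lam + cmu * (b1 (lift ord0 k) - b0 (lift ord0 k))).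
Proof.
rewrite /Jp mxE; apply: derive1_affine => t.
rewrite /gk /Delta_mu /Delta_rho /upd /= /ind.
instantiate (1 := gk cmu crho k lam (upd p l 0) b1 b0).
rewrite /gk /Delta_mu /Delta_rho /upd /=.
by case: (lift ord0 k == l); case: (ord0 == l); ring.
Qed.

Lemma Jb1_entry (R : realType) K (cmu crho lam : R) (p b1 b0 : 'I_K.+1 -> R) k l :
  Jb1 cmu crho lam p b1 b0 k l =
  ind R (lift ord0 k == l) * (- cmu * (1 - p ord0) - 2 * crho)
  + ind R (ord0 == l) * (- cmu * (p (lift ord0 k) - 1) + 2 * crho).
Proof.
rewrite /Jb1 mxE; apply: derive1_affine => t.
rewrite /gk /Delta_mu /Delta_rho /upd /= /ind.
instantiate (1 := gk cmu crho k lam p (upd b1 l 0) b0).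
rewrite /gk /Delta_mu /Delta_rho /upd /=.
by case: (lift ord0 k == l); case: (ord0 == l); ring.
Qed.

Lemma Jb0_entry (R : realType) K (cmu crho lam : R) (p b1 b0 : 'I_K.+1 -> R) k l :
  Jb0 cmu crho lam p b1 b0 k l =
  ind R (lift ord0 k == l) * (- cmu * p ord0 + 2 * crho)
  + ind R (ord0 == l) * (cmu * p (lift ord0 k) - 2 * crho).
Proof.
rewrite /Jb0 mxE; apply: derive1_affine => t.
rewrite /gk /Delta_mu /Delta_rho /upd /= /ind.
instantiate (1 := gk cmu crho k lam p b1 (upd b0 l 0)).
rewrite /gk /Delta_mu /Delta_rho /upd /=.
by case: (lift ord0 k == l); case: (ord0 == l); ring.
Qed.

Lemma quad_diag (R : realType) n (w : 'rV[R]_n) (d : 'rV[R]_n) :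
  (w *m diag_mx d *m w^T) 0 0 = \sum_l d 0 l * w 0 l ^+ 2.
Proof.
rewrite mul_mx_diag mxE; apply: eq_bigr => l _.
by rewrite !mxE; ring.
Qed.

Lemma quad_sand (R : realType) K n (v : 'rV[R]_K) (J : 'M[R]_(K, n)) (d : 'rV[R]_n) :
  (v *m (J *m diag_mx d *m J^T) *m v^T) 0 0
    = \sum_l d 0 l * (v *m J) 0 l ^+ 2.
Proof.
by rewrite -quad_diag trmx_mul !mulmxA.
Qed.

Lemma vJ_lift (R : realType) K (v : 'rV[R]_K) (J : 'M[R]_(K, K.+1)) al (be : 'I_K -> R) :
  (forall k l, J k l = ind R (lift ord0 k == l) * al + ind R (ord0 == l) * be k) ->
  forall k, (v *m J) 0 (lift ord0 k) = v 0 k * al.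
Proof.
move=> HJ k; rewrite mxE (bigD1 k) //= big1 ?addr0.
  by rewrite HJ eqxx /ind /= mul1r mul0r addr0.
move=> j /negbTE jk; rewrite HJ /ind (inj_eq (@lift_inj _ ord0)) ifF // (negbTE (neq_lift _ _)).
by rewrite !mul0r add0r mulr0.
Qed.

Lemma vJ_0 (R : realType) K (v : 'rV[R]_K) (J : 'M[R]_(K, K.+1)) al (be : 'I_K -> R) :
  (forall k l, J k l = ind R (lift ord0 k == l) * al + ind R (ord0 == l) * be k) ->
  (v *m J) 0 ord0 = \sum_k v 0 k * be k.
Proof.
move=> HJ; rewrite mxE; apply: eq_bigr => k _.
by rewrite HJ /ind eqxx eq_sym (negbTE (neq_lift ord0 k)) mul0r add0r mul1r.
Qed.

Lemma sumsq_vJ (R : realType) K (v : 'rV[R]_K) (J : 'M[R]_(K, K.+1)) al (be : 'I_K -> R) :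
  (forall k l, J k l = ind R (lift ord0 k == l) * al + ind R (ord0 == l) * be k) ->
  \sum_l (v *m J) 0 l ^+ 2 = (\sum_k v 0 k * be k) ^+ 2 + al ^+ 2 * \sum_k v 0 k ^+ 2.
Proof.
move=> HJ; rewrite big_ord_recl (vJ_0 v HJ); congr (_ + _).
rewrite mulr_sumr; apply: eq_bigr => k _.
by rewrite (vJ_lift v HJ) exprMn mulrC.
Qed.

Lemma sum_sq_le (R : realType) n (x : 'I_n -> R) :
  (\sum_k x k) ^+ 2 <= n%:R * \sum_k x k ^+ 2.
Proof.
elim: n x => [|n IH] x; first by rewrite !big_ord0 expr2 mul0r.
rewrite !big_ord_recr /=.
set s := \sum_(i < n) x (widen_ord (leqnSn n) i).
set S := \sum_(i < n) x (widen_ord (leqnSn n) i) ^+ 2.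
set y := x ord_max.
have h1 : s ^+ 2 <= n%:R * S by exact: IH.
have h2 : 0 <= S by apply: sumr_ge0 => i _; exact: sqr_ge0.
have hn : 0 <= (n%:R : R) by [].
rewrite -natr1.
have h3 : 2 * s * y <= S + n%:R * y ^+ 2.
  have [n0|npos] := eqVneq (n%:R : R) 0.
    rewrite n0 mul0r in h1.
    have s0 : s = 0.
      by apply/eqP; rewrite -sqrf_eq0 eq_le h1 sqr_ge0.
    by rewrite s0 mulr0 mul0r n0 mul0r addr0.
  have hp : 0 < (n%:R : R) by rewrite lt_def npos.
  have key : n%:R * (2 * s * y) <= n%:R * (S + n%:R * y ^+ 2).
    have : 0 <= (s - n%:R * y) ^+ 2 by exact: sqr_ge0.
    nra.
  by rewrite ler_pM2l in key.
nra.
Qed.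

Lemma sq_le_pow (R : realType) (delta y : R) : 0 < delta ->
  y ^+ 2 <= 1 + `|y| `^ (2 + delta).
Proof.
move=> d0.
have hp := powR_ge0 `|y| (2 + delta).
have [y1|y1] := lerP `|y| 1.
  have : y ^+ 2 <= 1.
    rewrite -real_normK ?num_real //.
    have := normr_ge0 y; nra.
  lra.
have h2 : `|y| `^ 2 <= `|y| `^ (2 + delta).
  by apply: ler_powR; [exact: ltW | lra].
have : `|y| `^ 2 = y ^+ 2.
  by rewrite -[2]/(2%:R) powR_mulrn // real_normK ?num_real.
lra.
Qed.

Lemma int_bound (R : realType) (mu : probability R R) (b delta zeta : R) :
  0 < delta ->
  (\int[mu]_y ((`|y| `^ (2 + delta))%:E) <= zeta%:E)%E ->
  (\int[mu]_y (((y - b) ^+ 2)%:E) <= (2 + 2 * b ^+ 2 + 2 * zeta)%:E)%E.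
Proof.
move=> d0 hm.
have mpow : measurable_fun [set: R] (EFin \o (fun y : R => (`|y| `^ (2 + delta)))).
  apply/measurable_EFinP.
  have -> : (fun y : R => `|y| `^ (2 + delta)) = (fun x => x `^ (2 + delta)) \o (@Num.norm _ R) by [].
  by apply: measurableT_comp; [exact: measurable_powR | exact: normr_measurable].
have mc : measurable_fun [set: R] (EFin \o (fun y : R => ((2 + 2 * b ^+ 2)))).
  exact: measurable_cst.
pose g := fun y : R => (((2 + 2 * b ^+ 2))%:E + 2%:E * (`|y| `^ (2 + delta))%:E)%E.
have H1 : (\int[mu]_y (((y - b) ^+ 2)%:E) <= \int[mu]_y g y)%E.
  apply: ge0_le_integral => //.
  - by move=> y _; rewrite lee_fin sqr_ge0.
  - apply/measurable_EFinP.
    apply: measurable_funX; apply: measurable_funB => //.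
  - apply: emeasurable_funD => //.
    exact: emeasurable_funM.
  - move=> y _; rewrite /g -EFinM -EFinD lee_fin.
    have := sq_le_pow y d0.
    have := sqr_ge0 (y + b).
    nra.
apply: le_trans H1 _.
rewrite /g ge0_integralD //; try solve [ by move=> y _; rewrite lee_fin; have := sqr_ge0 b; lra
  | by move=> y _; apply: mule_ge0 => //; rewrite lee_fin powR_ge0
  | exact: emeasurable_funM ].
rewrite integral_cst // ge0_integralZl //; try solve [by move=> y _; rewrite lee_fin powR_ge0].
rewrite [X in (_ <= X)%E]EFinD.
apply: leeD.
  rewrite -[X in (_ <= X)%E]mule1.
  apply: lee_pmul => //.
    by rewrite lee_fin; have := sqr_ge0 b; lra.
  exact: sprobability_setT.
rewrite EFinM; apply: lee_pmul => //.
exact: integral_ge0 => y _; rewrite lee_fin powR_ge0.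
Qed.

Lemma sigma_bounds (R : realType) K (F : mte_dist R K) (delta zeta eps : R) d l :
  0 < delta -> (momentF F delta d l <= zeta%:E)%E ->
  (eps%:E <= \int[lawY F d l]_y (((y - betaF F d l) ^+ 2)%:E))%E ->
  eps <= sigma2F F d l /\ sigma2F F d l <= 2 + 2 * betaF F d l ^+ 2 + 2 * zeta.
Proof.
move=> d0 hm hl.
have hb := int_bound (betaF F d l) d0 hm.
rewrite /sigma2F.
move: hl hb; case: (\int[lawY F d l]_y (((y - betaF F d l) ^+ 2)%:E))%E => [r| |] //=.
Qed.

Lemma Amx_entry_le (R : realType) K (p : 'I_K.+1 -> R) :
  (forall l, 0 <= p l <= 1) -> forall i j, `|Amx p i j| <= 1.
Proof.
move=> hp i j; rewrite /Amx.
case: (split_ordP i) => i' ->; case: (split_ordP j) => j' ->.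
- rewrite block_mxEul /A1mx mxE; case: (j' == ord0); first by rewrite normr1.
  rewrite /lam11; have := hp i'; move=> /andP[h1 h2].
  rewrite ler_norml; apply/andP; split; lra.
- by rewrite block_mxEur mxE normr0.
- by rewrite block_mxEdl mxE normr0.
- rewrite block_mxEdr /A0mx mxE; case: (j' == ord0); first by rewrite normr1.
  rewrite /lam01; have := hp i'; move=> /andP[h1 h2].
  rewrite ler_norml; apply/andP; split; lra.
Qed.

Lemma mul_entry_le (R : realType) m n (A : 'M[R]_(m, n)) (x : 'cV[R]_n) (a T : R) i :
  (forall j, `|A i j| <= a) -> (forall j, `|x j 0| <= T) -> 0 <= T ->
  `|(A *m x) i 0| <= n%:R * (a * T).
Proof.
move=> hA hx T0; rewrite mxE.
apply: le_trans (ler_norm_sum _ _ _) _.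
have -> : n%:R * (a * T) = \sum_(j < n) (a * T).
  by rewrite sumr_const card_ord mulr_natl.
apply: ler_sum => j _; rewrite normrM.
apply: ler_pM => //; exact: normr_ge0.
Qed.

Lemma beta_bound (R : realType) K (F : mte_dist R K) (theta : 'cV[R]_(2 + 2)) (T : R) :
  Amx (pZ F) *m theta = betavec F -> (forall l, 0 <= pZ F l <= 1) ->
  (forall j, `|theta j 0| <= T) -> 0 <= T ->
  forall d l, `|betaF F d l| <= 4 * T.
Proof.
move=> HA hp hT T0 d l.
have h4 : 4 * T = (2 + 2)%N%:R * (1 * T) by rewrite mul1r.
rewrite h4.
case: d.
- have := congr1 (fun M : 'cV[R]_(K.+1 + K.+1) => M (lshift _ l) 0) HA.
  rewrite /betavec col_mxEu mxE => <-.
  apply: mul_entry_le => // j; exact: Amx_entry_le.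
- have := congr1 (fun M : 'cV[R]_(K.+1 + K.+1) => M (rshift _ l) 0) HA.
  rewrite /betavec col_mxEd mxE => <-.
  apply: mul_entry_le => // j; exact: Amx_entry_le.
Qed.

Lemma lam_bound (R : realType) (cmu crho : R) (theta : 'cV[R]_(2 + 2)) (T : R) :
  (forall j, `|theta j 0| <= T) -> 0 <= T ->
  `|lamc cmu crho theta| <= 4 * ((`|cmu| + `|crho|) * T).
Proof.
move=> hT T0.
have -> : 4 * ((`|cmu| + `|crho|) * T) = (2 + 2)%N%:R * ((`|cmu| + `|crho|) * T) by [].
rewrite /lamc; apply: mul_entry_le => // j.
rewrite mxE /cvec.
have h1 := normr_ge0 cmu; have h2 := normr_ge0 crho.
case: (split_ordP j) => j' ->.
- rewrite col_mxEu mxE; case: (j' == ord0); lra.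
- rewrite col_mxEd mxE; case: (j' == ord0); rewrite normrN; lra.
Qed.

Lemma norm_lin (R : realType) (a x b y X Y : R) : `|x| <= X -> `|y| <= Y ->
  `|a * x + b * y| <= `|a| * X + `|b| * Y.
Proof.
move=> hx hy; apply: le_trans (ler_normD _ _) _; rewrite !normrM.
apply: lerD; apply: ler_wpM2l => //; exact: normr_ge0.
Qed.

Lemma diff_le (R : realType) (x y X Y : R) : `|x| <= X -> `|y| <= Y -> `|x - y| <= X + Y.
Proof.
move=> hx hy; have := norm_lin 1 (-1) hx hy.
by rewrite normrN normr1 !mul1r mulN1r.
Qed.

Lemma sq_le (R : realType) (x B : R) : `|x| <= B -> x ^+ 2 <= B ^+ 2.
Proof.
move=> h; rewrite -real_normK ?num_real //.
have := normr_ge0 x; nra.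
Qed.

Lemma Q_expand (R : realType) K (v : 'rV[R]_K) (J1 J2 J3 : 'M[R]_(K, K.+1)) (d1 d2 d3 : 'rV[R]_K.+1) :
  (v *m (J1 *m diag_mx d1 *m J1^T + J2 *m diag_mx d2 *m J2^T + J3 *m diag_mx d3 *m J3^T) *m v^T) 0 0
  = \sum_l d1 0 l * (v *m J1) 0 l ^+ 2 + \sum_l d2 0 l * (v *m J2) 0 l ^+ 2
    + \sum_l d3 0 l * (v *m J3) 0 l ^+ 2.
Proof.
by rewrite !mulmxDr !mulmxDl -!quad_sand !mxE.
Qed.

Lemma sumsq_pos (R : realType) K (v : 'rV[R]_K) : v != 0 -> 0 < \sum_k v 0 k ^+ 2.
Proof.
move=> vnz; rewrite lt_def sumr_ge0 ?andbT; last by move=> k _; exact: sqr_ge0.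
apply: contra vnz => /eqP H; apply/eqP/rowP => k; rewrite mxE.
have := @psumr_eq0P _ _ _ (fun i => v 0 i ^+ 2) (fun i _ => sqr_ge0 _) H k.
by move=> /(_ isT) /eqP; rewrite sqrf_eq0 => /eqP.
Qed.

Lemma sumsq_upper (R : realType) K (v : 'rV[R]_K) (J : 'M[R]_(K, K.+1)) al (be : 'I_K -> R) B :
  (forall k l, J k l = ind R (lift ord0 k == l) * al + ind R (ord0 == l) * be k) ->
  `|al| <= B -> (forall k, `|be k| <= B) ->
  \sum_l (v *m J) 0 l ^+ 2 <= (K%:R + 1) * B ^+ 2 * \sum_k v 0 k ^+ 2.
Proof.
move=> HJ ha hb; rewrite (sumsq_vJ v HJ).
have s0 : 0 <= \sum_k v 0 k ^+ 2 by apply: sumr_ge0 => k _; exact: sqr_ge0.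
have h1 : (\sum_k v 0 k * be k) ^+ 2 <= K%:R * (B ^+ 2 * \sum_k v 0 k ^+ 2).
  apply: le_trans (sum_sq_le _) _.
  apply: ler_wpM2l => //.
  rewrite mulr_sumr; apply: ler_sum => k _.
  rewrite exprMn mulrC; apply: ler_wpM2r; first exact: sqr_ge0.
  exact: sq_le.
have h2 : al ^+ 2 <= B ^+ 2 by exact: sq_le.
have h3 : 0 <= (K%:R : R) by [].
nra.
Qed.

Lemma sumsq_lower (R : realType) K (v : 'rV[R]_K) (J : 'M[R]_(K, K.+1)) al (be : 'I_K -> R) :
  (forall k l, J k l = ind R (lift ord0 k == l) * al + ind R (ord0 == l) * be k) ->
  al ^+ 2 * \sum_k v 0 k ^+ 2 <= \sum_l (v *m J) 0 l ^+ 2.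
Proof.
move=> HJ; rewrite (sumsq_vJ v HJ) lerDr; exact: sqr_ge0.
Qed.

Lemma wsum_lower (R : realType) n (d w : 'rV[R]_n) lo :
  (forall l, lo <= d 0 l) -> lo * \sum_l w 0 l ^+ 2 <= \sum_l d 0 l * w 0 l ^+ 2.
Proof.
move=> h; rewrite mulr_sumr; apply: ler_sum => l _.
apply: ler_wpM2r; [exact: sqr_ge0 | exact: h].
Qed.

Lemma wsum_upper (R : realType) n (d w : 'rV[R]_n) hi :
  (forall l, d 0 l <= hi) -> \sum_l d 0 l * w 0 l ^+ 2 <= hi * \sum_l w 0 l ^+ 2.
Proof.
move=> h; rewrite mulr_sumr; apply: ler_sum => l _.
apply: ler_wpM2r; [exact: sqr_ge0 | exact: h].
Qed.

Lemma m0_bound (R : realType) (cmu crho p : R) : 0 <= p <= 1 ->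
  (cmu ^+ 2 + crho ^+ 2) / 4 <=
  (- cmu * (1 - p) - 2 * crho) ^+ 2 + (- cmu * p + 2 * crho) ^+ 2.
Proof.
move=> /andP[p0 p1].
set x := - cmu * (1 - p) - 2 * crho.
set y := - cmu * p + 2 * crho.
have ex : x + y = - cmu by rewrite /x /y; ring.
have ey : p * x - (1 - p) * y = - 2 * crho by rewrite /x /y; ring.
have h1 : cmu ^+ 2 <= 2 * (x ^+ 2 + y ^+ 2).
  have : cmu ^+ 2 = (x + y) ^+ 2 by rewrite ex sqrrN.
  have := sqr_ge0 (x - y). nra.
have h2 : 4 * crho ^+ 2 <= x ^+ 2 + y ^+ 2.
  have : 4 * crho ^+ 2 = (p * x - (1 - p) * y) ^+ 2 by rewrite ey; ring.
  move=> ->.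
  have id : (p * x - (1 - p) * y) ^+ 2 + (p * y + (1 - p) * x) ^+ 2
     = (p ^+ 2 + (1 - p) ^+ 2) * (x ^+ 2 + y ^+ 2) by ring.
  have hq : p ^+ 2 + (1 - p) ^+ 2 <= 1 by nra.
  have hxy : 0 <= x ^+ 2 + y ^+ 2 by have := sqr_ge0 x; have := sqr_ge0 y; lra.
  have := sqr_ge0 (p * y + (1 - p) * x).
  have : (p ^+ 2 + (1 - p) ^+ 2) * (x ^+ 2 + y ^+ 2) <= x ^+ 2 + y ^+ 2.
    by rewrite -[X in _ <= X]mul1r; apply: ler_wpM2r.
  lra.
clearbody x y. have := sqr_ge0 crho. lra.
Qed.

Lemma p_norms (R : realType) (x : R) : 0 <= x <= 1 ->
  [/\ `|x - 1| <= 1, `|x| <= 1 & `|1 - x| <= 1].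
Proof.
move=> /andP[h1 h2]; split; rewrite ler_norml; apply/andP; split; lra.
Qed.

Lemma hB1_lem (R : realType) (cmu crho T x y : R) :
  0 <= T -> `|x| <= 4 * ((`|cmu| + `|crho|) * T) -> `|y| <= 4 * T + 4 * T ->
  `|1 * x + (- cmu) * y| <= 4 * ((`|cmu| + `|crho|) * T)
     + (`|cmu| + `|crho|) * (4 * T + 4 * T) + 3 * (`|cmu| + `|crho|).
Proof.
move=> T0 hx hy; apply: le_trans (norm_lin _ _ hx hy) _.
rewrite normr1 normrN mul1r.
have h1 := normr_ge0 cmu; have h2 := normr_ge0 crho.
have : `|cmu| * (4 * T + 4 * T) <= (`|cmu| + `|crho|) * (4 * T + 4 * T).
  by apply: ler_wpM2r; lra.
lra.
Qed.

Lemma hB2_lem (R : realType) (cmu crho T x c : R) :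
  0 <= T -> `|x| <= 1 -> `|c| <= 2 ->
  `|(- cmu) * x + c * crho| <= 4 * ((`|cmu| + `|crho|) * T)
     + (`|cmu| + `|crho|) * (4 * T + 4 * T) + 3 * (`|cmu| + `|crho|).
Proof.
move=> T0 hx hc; apply: le_trans (norm_lin _ _ hx (lexx `|crho|)) _.
rewrite normrN mulr1.
have h1 := normr_ge0 cmu; have h2 := normr_ge0 crho.
have : `|c| * `|crho| <= 2 * `|crho|.
  apply: ler_wpM2r => //.
have : 0 <= (`|cmu| + `|crho|) * (4 * T + 4 * T) by apply: mulr_ge0; lra.
have : 0 <= 4 * ((`|cmu| + `|crho|) * T) by apply: mulr_ge0 => //; apply: mulr_ge0; lra.
lra.
Qed.

Lemma final_arith (R : realType) (eps m0 a s Q1 Q2 Q3 S1 S2 S3 A2 A3 Dm N : R) :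
  0 < eps -> 0 < s -> 0 <= Dm -> Q1 + Q2 + Q3 = a * s ->
  A2 ^+ 2 * s <= S2 -> A3 ^+ 2 * s <= S3 -> m0 <= A2 ^+ 2 + A3 ^+ 2 ->
  0 * S1 <= Q1 -> eps * S2 <= Q2 -> eps * S3 <= Q3 ->
  Q1 <= Dm * S1 -> Q2 <= Dm * S2 -> Q3 <= Dm * S3 ->
  S1 <= N * s -> S2 <= N * s -> S3 <= N * s ->
  eps * m0 <= a <= Dm * (3 * N).
Proof.
move=> e0 s0 D0 EQ L2 L3 M0 W1l W2l W3l W1u W2u W3u U1 U2 U3.
apply/andP; split.
  rewrite -(ler_pM2r s0).
  have h1 : eps * m0 * s <= eps * ((A2 ^+ 2 + A3 ^+ 2) * s).
    rewrite -mulrA; apply: ler_wpM2l; first exact: ltW.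
    by apply: ler_wpM2r; [exact: ltW | ].
  have h2 : eps * ((A2 ^+ 2 + A3 ^+ 2) * s) <= eps * S2 + eps * S3.
    rewrite -mulrDr; apply: ler_wpM2l; first exact: ltW.
    rewrite mulrDl; exact: lerD.
  rewrite mul0r in W1l.
  lra.
rewrite -(ler_pM2r s0).
have h1 : Dm * S1 <= Dm * (N * s) by exact: ler_wpM2l.
have h2 : Dm * S2 <= Dm * (N * s) by exact: ler_wpM2l.
have h3 : Dm * S3 <= Dm * (N * s) by exact: ler_wpM2l.
have -> : Dm * (3 * N) * s = Dm * (N * s) + Dm * (N * s) + Dm * (N * s) by ring.
lra.
Qed.

Unset Implicit Arguments.

Theorem lemmaA2 (R : realType) (K : nat) (delta zeta eps : R)
    (Theta : set 'cV[R]_(2 + 2)) (cmu crho : R) :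
  0 < delta -> 0 < zeta -> 0 < eps < 1 / 2 ->
  compact Theta -> Theta° !=set0 ->
  (cmu, crho) != (0, 0) ->
  exists lo hi : R, 0 < lo /\
    forall (theta : 'cV[R]_(2 + 2)) (F : mte_dist R K),
      inP delta zeta eps Theta theta F ->
      forall a : R, eigenvalue (Smat cmu crho theta F) a -> lo <= a <= hi.
Proof.
move=> d0 z0 /andP[e0 e12] cT _ cnz.
have [T [T0 hT]] := bounded_entries cT.
pose C := `|cmu| + `|crho|.
pose Bt := 4 * T.
pose Lam := 4 * (C * T).
pose B := Lam + C * (Bt + Bt) + 3 * C.
pose Cs := 2 + 2 * Bt ^+ 2 + 2 * zeta.
pose e1 := eps^-1.
pose Dm := e1 + Cs * (e1 * e1).
pose m0 := (cmu ^+ 2 + crho ^+ 2) / 4.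
have C0 : 0 <= C by rewrite /C addr_ge0.
have Bt0 : 0 <= Bt by rewrite /Bt mulr_ge0.
have e1p : 0 < e1 by rewrite /e1 invr_gt0.
have ee1 : eps * e1 = 1 by rewrite /e1 mulfV // gt_eqF.
have m0p : 0 < m0.
  rewrite /m0 divr_gt0 //.
  have : (cmu != 0) || (crho != 0).
    by move: cnz; rewrite xpair_eqE negb_and.
  have g1 := sqr_ge0 cmu; have g2 := sqr_ge0 crho.
  case/orP => h.
    have : 0 < cmu ^+ 2 by rewrite lt_def sqr_ge0 sqrf_eq0 h.
    lra.
  have : 0 < crho ^+ 2 by rewrite lt_def sqr_ge0 sqrf_eq0 h.
  lra.
exists (eps * m0), (Dm * (3 * ((K%:R + 1) * B ^+ 2))).
split; first by rewrite mulr_gt0.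
move=> theta F [hdist [hK [hint [HA [hmom [hp [hq hsig]]]]]]] a /eigenvalueP [v Hv vnz].
have hth : forall j, `|theta j 0| <= T := fun j => hT theta (interior_subset hint) j 0.
have hp01 : forall l, 0 <= pZ F l <= 1 by case: hdist => _ [].
have hb := beta_bound HA hp01 hth T0.
have hl := lam_bound cmu crho hth T0.
have hs : forall d l, eps <= sigma2F F d l /\ sigma2F F d l <= Cs.
  move=> d l; have [h1 h2] := sigma_bounds d0 (hmom d l) (hsig d l).
  split => //; apply: le_trans h2 _; rewrite /Cs.
  have := sq_le (hb d l); rewrite /Bt; lra.
have qDZ_b : forall d l, eps * eps <= qDZ F d l <= 1.
  move=> d l; have /andP[p1 p2] := hp l; have /andP[q1 q2] := hq l.
  by case: d; rewrite /qDZ; apply/andP; split; nra.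
have dp_lo : forall l, 0 <= (\row_l (pZ F l * (1 - pZ F l) / qZ F l)) 0 l.
  move=> l; rewrite mxE; have /andP[p1 p2] := hp l; have /andP[q1 q2] := hq l.
  apply: divr_ge0; nra.
have dp_hi : forall l, (\row_l (pZ F l * (1 - pZ F l) / qZ F l)) 0 l <= Dm.
  move=> l; rewrite mxE; have /andP[p1 p2] := hp l; have /andP[q1 q2] := hq l.
  have qp : 0 < qZ F l by lra.
  rewrite ler_pdivrMr //.
  have Cs0 : 0 <= Cs * (e1 * e1).
    have [h1 h2] := hs true ord0.
    by apply: mulr_ge0; [lra | apply: mulr_ge0; lra].
  have : 1 <= e1 * qZ F l by nra.
  rewrite /Dm; nra.
have db_lo : forall d l, eps <= (\row_l (sigma2F F d l / qDZ F d l)) 0 l.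
  move=> d l; rewrite mxE; have /andP[q1 q2] := qDZ_b d l.
  have [s1 s2] := hs d l.
  have qp : 0 < qDZ F d l by nra.
  rewrite ler_pdivlMr //; nra.
have db_hi : forall d l, (\row_l (sigma2F F d l / qDZ F d l)) 0 l <= Dm.
  move=> d l; rewrite mxE; have /andP[q1 q2] := qDZ_b d l.
  have [s1 s2] := hs d l.
  have qp : 0 < qDZ F d l by nra.
  rewrite ler_pdivrMr //.
  have : 1 <= e1 * e1 * qDZ F d l.
    have : e1 * e1 * (eps * eps) = 1 by rewrite mulrACA [e1 * eps]mulrC ee1 mulr1.
    nra.
  rewrite /Dm; nra.
have EQ : (v *m Smat cmu crho theta F *m v^T) 0 0 = a * \sum_k v 0 k ^+ 2.
  rewrite Hv -scalemxAl mxE; congr (_ * _); rewrite mxE.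
  by apply: eq_bigr => k _; rewrite mxE expr2.
rewrite /Smat /Sigma_p /Sigma_b Q_expand in EQ.
move: EQ.
set lam := lamc cmu crho theta.
set p := pZ F.
set b1 := betaF F true.
set b0 := betaF F false.
move=> EQ.
have HJ1 := Jp_entry cmu crho lam p b1 b0.
have HJ2 := Jb1_entry cmu crho lam p b1 b0.
have HJ3 := Jb0_entry cmu crho lam p b1 b0.
have spos := sumsq_pos vnz.
move: EQ spos.
set s := \sum_k v 0 k ^+ 2.
move=> EQ spos.
have hB1 : forall x y, `|x| <= Lam -> `|y| <= Bt + Bt -> `|1 * x + (- cmu) * y| <= B.
  move=> x y; exact: hB1_lem.
have hB2 : forall x c, `|x| <= 1 -> `|c| <= 2 -> `|(- cmu) * x + c * crho| <= B.
  move=> x c; exact: hB2_lem.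
have n2 : `|(2 : R)| <= 2 by rewrite ger0_norm.
have nm2 : `|(- 2 : R)| <= 2 by rewrite normrN ger0_norm.
have hpm1 : forall l, `|p l - 1| <= 1 by move=> l; case: (p_norms (hp01 l)).
have hp1 : forall l, `|p l| <= 1 by move=> l; case: (p_norms (hp01 l)).
have h1p : forall l, `|1 - p l| <= 1 by move=> l; case: (p_norms (hp01 l)).
have U1 : \sum_l (v *m Jp cmu crho lam p b1 b0) 0 l ^+ 2 <= (K%:R + 1) * B ^+ 2 * s.
  apply: (sumsq_upper v HJ1).
    rewrite (_ : lam - cmu * (b1 ord0 - b0 ord0) = 1 * lam + (- cmu) * (b1 ord0 - b0 ord0)); last by ring.
    by apply: hB1 => //; apply: diff_le; apply: hb.
  move=> k.
  rewrite (_ : - lam + cmu * (b1 (lift ord0 k) - b0 (lift ord0 k)) = 1 * (- lam) + (- cmu) * (b0 (lift ord0 k) - b1 (lift ord0 k))); last by ring.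
  by apply: hB1; [rewrite normrN | apply: diff_le; apply: hb].
have U2 : \sum_l (v *m Jb1 cmu crho lam p b1 b0) 0 l ^+ 2 <= (K%:R + 1) * B ^+ 2 * s.
  apply: (sumsq_upper v HJ2).
    rewrite (_ : - cmu * (1 - p ord0) - 2 * crho = (- cmu) * (1 - p ord0) + (- 2) * crho); last by ring.
    exact: (hB2 _ _ (h1p ord0) nm2).
  move=> k.
  exact: (hB2 _ _ (hpm1 _) n2).
have U3 : \sum_l (v *m Jb0 cmu crho lam p b1 b0) 0 l ^+ 2 <= (K%:R + 1) * B ^+ 2 * s.
  apply: (sumsq_upper v HJ3).
    exact: (hB2 _ _ (hp1 _) n2).
  move=> k.
  have hx : `|- p (lift ord0 k)| <= 1 by rewrite normrN.
  rewrite (_ : cmu * p (lift ord0 k) - 2 * crho = (- cmu) * (- p (lift ord0 k)) + (- 2) * crho); last by ring.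
  exact: (hB2 _ _ hx nm2).
have L2 := sumsq_lower v HJ2.
have L3 := sumsq_lower v HJ3.
have M0 := m0_bound cmu crho (hp01 ord0).
have W1l := wsum_lower (v *m Jp cmu crho lam p b1 b0) dp_lo.
have W2l := wsum_lower (v *m Jb1 cmu crho lam p b1 b0) (db_lo true).
have W3l := wsum_lower (v *m Jb0 cmu crho lam p b1 b0) (db_lo false).
have W1u := wsum_upper (v *m Jp cmu crho lam p b1 b0) dp_hi.
have W2u := wsum_upper (v *m Jb1 cmu crho lam p b1 b0) (db_hi true).
have W3u := wsum_upper (v *m Jb0 cmu crho lam p b1 b0) (db_hi false).
move: EQ L2 L3 M0 W1l W2l W3l W1u W2u W3u U1 U2 U3.
set Q1 := \sum_l (\row_l0 (p l0 * (1 - p l0) / qZ F l0)) 0 l * _ ^+ 2.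
set Q2 := \sum_l (\row_l0 (sigma2F F true l0 / qDZ F true l0)) 0 l * _ ^+ 2.
set Q3 := \sum_l (\row_l0 (sigma2F F false l0 / qDZ F false l0)) 0 l * _ ^+ 2.
set S1 := \sum_l (v *m Jp cmu crho lam p b1 b0) 0 l ^+ 2.
set S2 := \sum_l (v *m Jb1 cmu crho lam p b1 b0) 0 l ^+ 2.
set S3 := \sum_l (v *m Jb0 cmu crho lam p b1 b0) 0 l ^+ 2.
set A2 := (- cmu * (1 - p ord0) - 2 * crho).
set A3 := (- cmu * p ord0 + 2 * crho).
move=> EQ L2 L3 M0 W1l W2l W3l W1u W2u W3u U1 U2 U3.
have Dm0 : 0 <= Dm.
  have [h1 _] := hs true ord0.
  rewrite /Dm; apply: addr_ge0; first exact: ltW.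
  apply: mulr_ge0; last by apply: mulr_ge0; exact: ltW.
  rewrite /Cs; have := sqr_ge0 Bt; lra.
exact: (final_arith e0 spos Dm0 EQ L2 L3 M0 W1l W2l W3l W1u W2u W3u U1 U2 U3).
Qed.
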